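(* Let $k\in\mathbb{N}_0$. Then: (a) the set of $v\in\widetilde V$ with $\rho_k(v)=k+4$ is exactly $\{\langle1\rangle^{k+4},\ \langle2\rangle^{k+3},\ (\langle3\rangle^{k+2},1),\ (\langle5\rangle^{k+1},2,1)\}$; (b) the set of minimal elements of $\{v\in\widetilde V:\rho_k(v)>k+4\}$ is exactly $\{\langle1\rangle^{k+5},\ (2,\langle1\rangle^{k+3}),\ (3,\langle2\rangle^{k+2}),\ (4,\langle3\rangle^{k+1},1),\ (6,\langle5\rangle^{k},2,1)\}$; (c) consequently, for every $w\in\widetilde V$ with $\rho_k(w)>k+4$ there exists $v\in\widetilde V$ with $v<w$ and $\rho_k(v)=k+4$.
   Context: For $k\in\mathbb{N}_0$ put $t=k+2$, $u_0=0$, $u_1=1$, $u_{i+2}=tu_{i+1}-u_i$; $\rho_k(0)=0$ and $\rho_k(n)=1+\frac{u_{n-1}}{u_n+1}$ for $n\in\mathbb{N}$. $\widetilde V$ is the set of infinite nonincreasing sequences of nonnegative integers that are eventually $0$ (written by listing nonzero entries), with componentwise order $\le$; $v<w$ means $v\le w$, $v\ne w$. $\rho_k(v)=\sum_i\rho_k(v_i)$. $\langle s\rangle^r$ denotes $s$ repeated $r$ times (omitted if $r=0$). *)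

(* Defs.v *)
From mathcomp Require Import all_boot all_order all_algebra.
Set Implicit Arguments. Unset Strict Implicit. Unset Printing Implicit Defensive.
Import Order.TTheory GRing.Theory Num.Theory.
Local Open Scope ring_scope.

Fixpoint upair (k i : nat) : int * int :=
  match i with
  | 0%N => (0, 1)
  | i'.+1 => let p := upair k i' in (p.2, (k.+2)%:Z * p.2 - p.1)
  end.

Definition u (k i : nat) : int := (upair k i).1.

Definition rho (k n : nat) : rat :=
  if n is n'.+1 then 1 + (u k n')%:~R / ((u k n)%:~R + 1) else 0.

(* An element of \widetilde V is represented by the list of its nonzero
   entries: a nonincreasing list of positive naturals.  The infinite
   sequence is i |-> nth 0 v i. *)
Definition inV (v : seq nat) : bool := sorted geq v && all (fun x => 0 < x)%N v.

Definition vle (v w : seq nat) : Prop := forall i, (nth 0 v i <= nth 0 w i)%N.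
Definition vlt (v w : seq nat) : Prop := vle v w /\ v <> w.

Definition rhov (k : nat) (v : seq nat) : rat := \sum_(x <- v) rho k x.

(* Main.v *)
Require Import Defs.
From mathcomp Require Import all_boot all_order all_algebra.
From mathcomp Require Import ring lra zify.
Import Order.TTheory GRing.Theory Num.Theory.
Local Open Scope ring_scope.

Definition X (k : nat) : rat := k%:R.
Definition U k n : rat := (u k n)%:~R.
Definition cc k : rat :=
  ((X k + 2) ^+ 2 - (X k + 2) - 1) / ((X k + 2) ^+ 3 - (X k + 2) ^+ 2 - 2 * (X k + 2) + 1).

Lemma nz (x : rat) : 0 < x -> x != 0.
Proof. by move=> h; rewrite gt_eqF. Qed.

Ltac pos hx :=
  have := exprn_ge0 2 hx; have := exprn_ge0 3 hx; have := exprn_ge0 4 hx;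
  have := exprn_ge0 5 hx; have := exprn_ge0 6 hx; have := exprn_ge0 7 hx;
  have := exprn_ge0 8 hx; lra.

Lemma U0 k : U k 0 = 0. Proof. by []. Qed.
Lemma U1 k : U k 1 = 1. Proof. by []. Qed.
Lemma USS k n : U k n.+2 = (X k + 2) * U k n.+1 - U k n.
Proof.
rewrite /U /X /u /= rmorphB rmorphM /=.
by rewrite -addn2 -pmulrn natrD.
Qed.
Lemma U2 k : U k 2 = X k + 2.
Proof. by rewrite USS U1 U0; ring. Qed.
Lemma U3 k : U k 3 = (X k + 2) ^+ 2 - 1.
Proof. by rewrite USS U2 U1; ring. Qed.
Lemma U4 k : U k 4 = (X k + 2) ^+ 3 - 2 * (X k + 2).
Proof. by rewrite USS U3 U2; ring. Qed.
Lemma U5 k : U k 5 = (X k + 2) ^+ 4 - 3 * (X k + 2) ^+ 2 + 1.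
Proof. by rewrite USS U4 U3; ring. Qed.
Lemma U6 k : U k 6 = (X k + 2) ^+ 5 - 4 * (X k + 2) ^+ 3 + 3 * (X k + 2).
Proof. by rewrite USS U5 U4; ring. Qed.
Lemma rhoS k n : rho k n.+1 = 1 + U k n / (U k n.+1 + 1).
Proof. by []. Qed.
Lemma rho0 k : rho k 0 = 0. Proof. by []. Qed.
Lemma rho1 k : rho k 1 = 1. Proof. by rewrite rhoS U0 mul0r addr0. Qed.

Ltac nzs hy := repeat match goal with |- is_true (_ && _) => apply/andP; split end; apply: nz; pos hy.
Ltac rhoE := rewrite /cc ?rhoS ?U6 ?U5 ?U4 ?U3 ?U2 ?U1 ?U0.
Lemma Fc0 k : 0 < cc k.
Proof.
rewrite -subr_gt0; have hx : 0 <= X k := ler0n _ _.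
have -> : cc k - (0) = (1 + 3 * X k + X k ^+2) / (1 + 6 * X k + 5 * X k ^+2 + X k ^+3).
  rhoE; move: (X k) hx => y hy; field; nzs hy.
apply: divr_gt0; pos hx.
Qed.

Lemma Fc1 k : (X k + 1) * cc k <= 1.
Proof.
rewrite -subr_ge0; have hx : 0 <= X k := ler0n _ _.
have -> : 1 - ((X k + 1) * cc k) = (2 * X k + X k ^+2) / (1 + 6 * X k + 5 * X k ^+2 + X k ^+3).
  rhoE; move: (X k) hx => y hy; field; nzs hy.
apply: divr_ge0; [pos hx|pos hx].
Qed.

Lemma Fc3 k : 1 <= cc k * (X k + 2) - cc k ^+ 2.
Proof.
rewrite -subr_ge0; have hx : 0 <= X k := ler0n _ _.
have -> : cc k * (X k + 2) - cc k ^+ 2 - (1) = (X k) / (1 + 12 * X k + 46 * X k ^+2 + 62 * X k ^+3 + 37 * X k ^+4 + 10 * X k ^+5 + X k ^+6).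
  rhoE; move: (X k) hx => y hy; field; nzs hy.
apply: divr_ge0; [pos hx|pos hx].
Qed.

Lemma Fk k : X k * (1 + cc k) + rho k 4 + rho k 2 + 1 < X k + 4.
Proof.
rewrite -subr_gt0; have hx : 0 <= X k := ler0n _ _.
have -> : X k + 4 - (X k * (1 + cc k) + rho k 4 + rho k 2 + 1) = (1) / (15 + 110 * X k + 203 * X k ^+2 + 164 * X k ^+3 + 66 * X k ^+4 + 13 * X k ^+5 + X k ^+6).
  rhoE; move: (X k) hx => y hy; field; nzs hy.
apply: divr_gt0; pos hx.
Qed.

Lemma Id2 k : (X k + 3) * rho k 2 = X k + 4.
Proof. have hx : 0 <= X k := ler0n _ _. rhoE; move: (X k) hx => y hy; field; nzs hy. Qed.

Lemma Id3 k : (X k + 2) * rho k 3 + 1 = X k + 4.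
Proof. have hx : 0 <= X k := ler0n _ _. rhoE; move: (X k) hx => y hy; field; nzs hy. Qed.

Lemma Id5 k : (X k + 1) * rho k 5 + rho k 2 + 1 = X k + 4.
Proof. have hx : 0 <= X k := ler0n _ _. rhoE; move: (X k) hx => y hy; field; nzs hy. Qed.

Lemma Lw2 k : 1 < rho k 2.
Proof.
rewrite -subr_gt0; have hx : 0 <= X k := ler0n _ _.
have -> : rho k 2 - (1) = (1) / (3 + X k).
  rhoE; move: (X k) hx => y hy; field; nzs hy.
apply: divr_gt0; pos hx.
Qed.

Lemma Lw3 k : X k + 4 < rho k 3 + (X k + 2) * rho k 2.
Proof.
rewrite -subr_gt0; have hx : 0 <= X k := ler0n _ _.
have -> : rho k 3 + (X k + 2) * rho k 2 - (X k + 4) = (1) / (6 + 5 * X k + X k ^+2).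
  rhoE; move: (X k) hx => y hy; field; nzs hy.
apply: divr_gt0; pos hx.
Qed.

Lemma Lw4 k : X k + 4 < rho k 4 + (X k + 1) * rho k 3 + 1.
Proof.
rewrite -subr_gt0; have hx : 0 <= X k := ler0n _ _.
have -> : rho k 4 + (X k + 1) * rho k 3 + 1 - (X k + 4) = (1) / (10 + 15 * X k + 7 * X k ^+2 + X k ^+3).
  rhoE; move: (X k) hx => y hy; field; nzs hy.
apply: divr_gt0; pos hx.
Qed.

Lemma Lw6 k : X k + 4 < rho k 6 + X k * rho k 5 + rho k 2 + 1.
Proof.
rewrite -subr_gt0; have hx : 0 <= X k := ler0n _ _.
have -> : rho k 6 + X k * rho k 5 + rho k 2 + 1 - (X k + 4) = (1) / (21 + 70 * X k + 84 * X k ^+2 + 45 * X k ^+3 + 11 * X k ^+4 + X k ^+5).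
  rhoE; move: (X k) hx => y hy; field; nzs hy.
apply: divr_gt0; pos hx.
Qed.

Lemma M2a k : rho k 2 <= 2.
Proof.
rewrite -subr_ge0; have hx : 0 <= X k := ler0n _ _.
have -> : 2 - (rho k 2) = (2 + X k) / (3 + X k).
  rhoE; move: (X k) hx => y hy; field; nzs hy.
apply: divr_ge0; [pos hx|pos hx].
Qed.

Lemma M3a k : rho k 3 + (X k + 2) * rho k 2 - (X k + 4) <= rho k 3 - rho k 2.
Proof.
rewrite -subr_ge0; have hx : 0 <= X k := ler0n _ _.
have -> : rho k 3 - rho k 2 - (rho k 3 + (X k + 2) * rho k 2 - (X k + 4)) = (0) / (1).
  rhoE; move: (X k) hx => y hy; field; nzs hy.
apply: divr_ge0; [pos hx|pos hx].
Qed.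

Lemma M3b k : rho k 3 + (X k + 2) * rho k 2 - (X k + 4) <= rho k 2 - 1.
Proof.
rewrite -subr_ge0; have hx : 0 <= X k := ler0n _ _.
have -> : rho k 2 - 1 - (rho k 3 + (X k + 2) * rho k 2 - (X k + 4)) = (1 + X k) / (6 + 5 * X k + X k ^+2).
  rhoE; move: (X k) hx => y hy; field; nzs hy.
apply: divr_ge0; [pos hx|pos hx].
Qed.

Lemma M4a k : rho k 4 + (X k + 1) * rho k 3 + 1 - (X k + 4) <= rho k 4 - rho k 3.
Proof.
rewrite -subr_ge0; have hx : 0 <= X k := ler0n _ _.
have -> : rho k 4 - rho k 3 - (rho k 4 + (X k + 1) * rho k 3 + 1 - (X k + 4)) = (0) / (1).
  rhoE; move: (X k) hx => y hy; field; nzs hy.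
apply: divr_ge0; [pos hx|pos hx].
Qed.

Lemma M4b k : rho k 4 + (X k + 1) * rho k 3 + 1 - (X k + 4) <= rho k 3 - rho k 2.
Proof.
rewrite -subr_ge0; have hx : 0 <= X k := ler0n _ _.
have -> : rho k 3 - rho k 2 - (rho k 4 + (X k + 1) * rho k 3 + 1 - (X k + 4)) = (2 + 4 * X k + X k ^+2) / (30 + 55 * X k + 36 * X k ^+2 + 10 * X k ^+3 + X k ^+4).
  rhoE; move: (X k) hx => y hy; field; nzs hy.
apply: divr_ge0; [pos hx|pos hx].
Qed.

Lemma M4c k : rho k 4 + (X k + 1) * rho k 3 + 1 - (X k + 4) <= 1.
Proof.
rewrite -subr_ge0; have hx : 0 <= X k := ler0n _ _.
have -> : 1 - (rho k 4 + (X k + 1) * rho k 3 + 1 - (X k + 4)) = (9 + 15 * X k + 7 * X k ^+2 + X k ^+3) / (10 + 15 * X k + 7 * X k ^+2 + X k ^+3).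
  rhoE; move: (X k) hx => y hy; field; nzs hy.
apply: divr_ge0; [pos hx|pos hx].
Qed.

Lemma M5a k : rho k 6 + X k * rho k 5 + rho k 2 + 1 - (X k + 4) <= rho k 6 - rho k 5.
Proof.
rewrite -subr_ge0; have hx : 0 <= X k := ler0n _ _.
have -> : rho k 6 - rho k 5 - (rho k 6 + X k * rho k 5 + rho k 2 + 1 - (X k + 4)) = (0) / (1).
  rhoE; move: (X k) hx => y hy; field; nzs hy.
apply: divr_ge0; [pos hx|pos hx].
Qed.

Lemma M5b k : rho k 6 + X k * rho k 5 + rho k 2 + 1 - (X k + 4) <= rho k 5 - rho k 4.
Proof.
rewrite -subr_ge0; have hx : 0 <= X k := ler0n _ _.
have -> : rho k 5 - rho k 4 - (rho k 6 + X k * rho k 5 + rho k 2 + 1 - (X k + 4)) = (2 + 9 * X k + 6 * X k ^+2 + X k ^+3) / (105 + 455 * X k + 791 * X k ^+2 + 715 * X k ^+3 + 364 * X k ^+4 + 105 * X k ^+5 + 16 * X k ^+6 + X k ^+7).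
  rhoE; move: (X k) hx => y hy; field; nzs hy.
apply: divr_ge0; [pos hx|pos hx].
Qed.

Lemma M5c k : rho k 6 + X k * rho k 5 + rho k 2 + 1 - (X k + 4) <= rho k 2 - 1.
Proof.
rewrite -subr_ge0; have hx : 0 <= X k := ler0n _ _.
have -> : rho k 2 - 1 - (rho k 6 + X k * rho k 5 + rho k 2 + 1 - (X k + 4)) = (6 + 21 * X k + 21 * X k ^+2 + 8 * X k ^+3 + X k ^+4) / (21 + 70 * X k + 84 * X k ^+2 + 45 * X k ^+3 + 11 * X k ^+4 + X k ^+5).
  rhoE; move: (X k) hx => y hy; field; nzs hy.
apply: divr_ge0; [pos hx|pos hx].
Qed.

Lemma M5d k : rho k 6 + X k * rho k 5 + rho k 2 + 1 - (X k + 4) <= 1.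
Proof.
rewrite -subr_ge0; have hx : 0 <= X k := ler0n _ _.
have -> : 1 - (rho k 6 + X k * rho k 5 + rho k 2 + 1 - (X k + 4)) = (20 + 70 * X k + 84 * X k ^+2 + 45 * X k ^+3 + 11 * X k ^+4 + X k ^+5) / (21 + 70 * X k + 84 * X k ^+2 + 45 * X k ^+3 + 11 * X k ^+4 + X k ^+5).
  rhoE; move: (X k) hx => y hy; field; nzs hy.
apply: divr_ge0; [pos hx|pos hx].
Qed.

Lemma natrDn (m n : nat) : (m + n)%N%:R = m%:R + n%:R :> rat.
Proof. exact: natrD. Qed.

Lemma U_mono k n : 0 <= U k n /\ U k n <= U k n.+1.
Proof.
have hx : 0 <= X k := ler0n _ _.
elim: n => [|n [h1 h2]]; first by rewrite U0 U1; lra.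
split; first lra.
rewrite USS.
have := mulr_ge0 hx (le_trans h1 h2). lra.
Qed.

Lemma cassini k n : U k n.+1 ^+ 2 - U k n * U k n.+2 = 1.
Proof.
elim: n => [|n IH]; first by rewrite U0 U1 mul0r subr0 expr1n.
transitivity (U k n.+1 ^+ 2 - U k n * U k n.+2); last exact: IH.
rewrite !USS; ring.
Qed.

Lemma Ubound k n : U k n <= cc k * U k n.+1.
Proof.
have c0 := Fc0 k. have c3 := Fc3 k.
elim: n => [|n IH]; first by rewrite U0 U1 mulr1; lra.
rewrite USS. have [h0 h1] := U_mono k n. have [h2 h3] := U_mono k n.+1.
have p1 := ler_wpM2l (ltW c0) IH.
have p2 : 0 <= (cc k * (X k + 2) - cc k ^+ 2 - 1) * U k n.+1.
  by apply: mulr_ge0; lra.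
have p3 : 0 <= U k n.+1 by lra.
rewrite expr2 in p2. lra.
Qed.

Lemma rho_lt k n : rho k n < 1 + cc k.
Proof.
have c0 := Fc0 k. case: n => [|n]; first by rewrite rho0; lra.
rewrite rhoS ltrD2l. have [h0 h1] := U_mono k n.+1. have hb := Ubound k n.
rewrite ltr_pdivrMr; last lra.
lra.
Qed.

Lemma rho_ge1 k n : (0 < n)%N -> 1 <= rho k n.
Proof.
case: n => [//|n] _. rewrite rhoS lerDl.
have [h0 h1] := U_mono k n. have [h2 h3] := U_mono k n.+1.
apply: divr_ge0; lra.
Qed.

Lemma rho_step k n : rho k n <= rho k n.+1.
Proof.
case: n => [|n]; first by rewrite rho0 rho1.
rewrite !rhoS lerD2l.
have [h0 h1] := U_mono k n. have [h2 h3] := U_mono k n.+1.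
have [h4 h5] := U_mono k n.+2. have cs := cassini k n.
rewrite ler_pdivrMr; last lra.
rewrite mulrAC ler_pdivlMr; last lra.
rewrite expr2 in cs. lra.
Qed.

Lemma rho_mono k m n : (m <= n)%N -> rho k m <= rho k n.
Proof.
move=> /subnK <-. elim: (n - m)%N => [|d IH]; first by rewrite add0n.
rewrite addSn. exact: le_trans IH (rho_step _ _).
Qed.

Lemma sum_le a b (g : nat -> rat) M : (forall i, (a <= i < b)%N -> g i <= M) ->
  \sum_(a <= i < b) g i <= (b - a)%N%:R * M.
Proof. by move=> h; rewrite mulr_natl -sumr_const_nat; exact: ler_sum_nat. Qed.

Lemma sum_ge a b (g : nat -> rat) M : (forall i, (a <= i < b)%N -> M <= g i) ->
  (b - a)%N%:R * M <= \sum_(a <= i < b) g i.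
Proof. by move=> h; rewrite mulr_natl -sumr_const_nat; exact: ler_sum_nat. Qed.

Lemma sum_lt a b (g : nat -> rat) M : (a < b)%N -> (forall i, (a <= i < b)%N -> g i < M) ->
  \sum_(a <= i < b) g i < (b - a)%N%:R * M.
Proof.
move=> ab h. rewrite big_ltn //.
have -> : (b - a)%N = ((b - a.+1) + 1)%N by lia.
rewrite natrDn mulrDl mul1r [X in _ < X]addrC.
apply: ltr_leD; first by apply: h; rewrite leqnn ab.
apply: sum_le => i /andP[h1 h2]; apply: ltW; apply: h; apply/andP; split => //; lia.
Qed.

Lemma rhov_nth k v : rhov k v = \sum_(0 <= i < size v) rho k (nth 0%N v i).
Proof. by rewrite /rhov (big_nth 0%N). Qed.

Lemma srt_nth (v : seq nat) i j : sorted geq v -> (i <= j)%N -> (j < size v)%N ->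
  (nth 0 v j <= nth 0 v i)%N.
Proof.
move=> s hij hj.
have tr : transitive geq by move=> a b c /= h1 h2; exact: leq_trans h2 h1.
have := sorted_leq_nth tr (fun x => leqnn x) 0%N s.
move=> /(_ i j); rewrite !inE; apply => //; lia.
Qed.

Lemma pos_nth (v : seq nat) i : all (fun x => 0 < x)%N v -> (i < size v)%N -> (0 < nth 0 v i)%N.
Proof. by move=> /allP h hi; apply: h; exact: mem_nth. Qed.

Lemma natX k n : (k + n)%N%:R = X k + n%:R :> rat.
Proof. by rewrite natrDn. Qed.

Lemma K4 k : ((k + 4)%:R : rat) = X k + 4.
Proof. by rewrite natrD. Qed.

Lemma eq_nseq (v : seq nat) n a : size v = n -> (forall i, (i < n)%N -> nth 0 v i = a) -> v = nseq n a.
Proof.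
move=> hs h; apply: (@eq_from_nth _ 0%N); first by rewrite size_nseq.
by move=> i hi; rewrite nth_nseq -hs hi h // -hs.
Qed.

Definition g k (v : seq nat) i := rho k (nth 0%N v i).

Definition Alist k := [:: nseq k.+4 1%N; nseq k.+3 2%N;
                rcons (nseq k.+2 3%N) 1%N; nseq k.+1 5%N ++ [:: 2%N; 1%N]].
Definition Blist k := [:: nseq k.+4.+1 1%N; 2%N :: nseq k.+3 1%N; 3%N :: nseq k.+2 2%N;
                4%N :: rcons (nseq k.+1 3%N) 1%N;
                6%N :: nseq k 5%N ++ [:: 2%N; 1%N]].

Lemma natXsub k a b c : (b - a)%N = (k + c)%N -> (b - a)%N%:R = X k + c%:R :> rat.
Proof. by move=> ->; rewrite natX. Qed.

Lemma natS1 k : (k.+1)%:R = X k + 1 :> rat.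
Proof. by rewrite -addn1 natX. Qed.

Lemma A_dir k v : inV v -> rhov k v = (k + 4)%:R -> v \in Alist k.
Proof.
move=> /andP[srt pv] H.
have hx : 0 <= X k := ler0n _ _.
have c0 := Fc0 k. have c1 := Fc1 k.
have hxc : 0 <= X k * cc k by apply: mulr_ge0; lra.
rewrite rhov_nth K4 in H.
have {}H : \sum_(0 <= i < size v) g k v i = X k + 4 := H.
have pos i : (i < size v)%N -> (0 < nth 0%N v i)%N := fun h => pos_nth v i pv h.
have dec i j : (i <= j)%N -> (j < size v)%N -> (nth 0%N v j <= nth 0%N v i)%N :=
  fun a b => srt_nth v i j srt a b.
have glt i : g k v i < 1 + cc k := rho_lt _ _.
have gge1 i : (i < size v)%N -> 1 <= g k v i := fun h => rho_ge1 k _ (pos i h).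
have gmin i a : (a <= nth 0%N v i)%N -> rho k a <= g k v i := fun h => @rho_mono k _ _ h.
have gmax i a : (nth 0%N v i <= a)%N -> g k v i <= rho k a := fun h => @rho_mono k _ _ h.
have r1 := rho1 k.
have [hm|[hm|[hm|hm]]] : (size v <= k.+2)%N \/ size v = k.+3 \/
    size v = k.+4 \/ (k.+4.+1 <= size v)%N by lia.
- exfalso. move: H. case E: (size v) => [|m].
  + by rewrite big_geq //; lra.
  + move=> H.
    have : \sum_(0 <= i < m.+1) g k v i < (m.+1 - 0)%N%:R * (1 + cc k) by apply: sum_lt.
    rewrite H subn0.
    have hm' : (m.+1%:R : rat) <= X k + 2 by rewrite -(natX k 2) ler_nat -E; lia.
    have p1 := ler_wpM2r (_ : 0 <= 1 + cc k) hm'.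
    have := p1 (ltac:(lra)). lra.
- move: H; rewrite hm => H.
  have hk2 : (k.+2 < size v)%N by rewrite hm; lia.
  have hlast := pos _ hk2.
  case: (ltnP 1 (nth 0%N v k.+2)) => ha.
  +
    have ge2 i : (i <= k.+2)%N -> (2 <= nth 0%N v i)%N.
      by move=> hi; apply: leq_trans ha (dec _ _ hi hk2).
    case: (ltnP 2 (nth 0%N v 0)) => h0.
    * exfalso.
      have S : rho k 3 + (X k + 2) * rho k 2 <= \sum_(0 <= i < k.+3) g k v i.
        rewrite big_ltn //; apply: lerD; first exact: gmin.
        rewrite -(natXsub k 1 (k.+3) 2) ?subn1 ?addn2 //.
        by apply: sum_ge => i /andP[h1 h2]; apply: gmin; apply: ge2; lia.
      have := Lw3 k. lra.
    * have -> : v = nseq k.+3 2.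
        apply: eq_nseq; first by rewrite hm.
        move=> i hi; apply/eqP; rewrite eqn_leq; apply/andP; split.
          by apply: leq_trans (dec 0 i _ _) h0; rewrite ?hm; lia.
        by apply: ge2; lia.
      by rewrite !inE eqxx !orbT.
  + have ha1 : nth 0%N v k.+2 = 1%N by lia.
    have hk1 : (k.+1 < size v)%N by rewrite hm; lia.
    have H2 : \sum_(0 <= i < k.+1) g k v i + g k v k.+1 + 1 = X k + 4.
      by rewrite -H [RHS]big_nat_recr // [in RHS]big_nat_recr // /g ha1 r1.
    case: (ltngtP (nth 0%N v k.+1) 2) => hb.
    * exfalso.
      have hb1 : g k v k.+1 <= 1 by rewrite -r1; apply: gmax; lia.
      have : \sum_(0 <= i < k.+1) g k v i < (k.+1 - 0)%N%:R * (1 + cc k) by apply: sum_lt.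
      rewrite subn0 natS1. lra.
    *
      have ge3 i : (i <= k.+1)%N -> (3 <= nth 0%N v i)%N.
        by move=> hi; apply: leq_trans hb (dec _ _ hi hk1).
      case: (ltnP 3 (nth 0%N v 0)) => h0.
      -- exfalso.
         have S : rho k 4 + (X k + 1) * rho k 3 <= \sum_(0 <= i < k.+2) g k v i.
           rewrite big_ltn //; apply: lerD; first exact: gmin.
           rewrite -(natXsub k 1 (k.+2) 1) ?subn1 ?addn1 //.
           by apply: sum_ge => i /andP[h1 h2]; apply: gmin; apply: ge3; lia.
         have H3 : \sum_(0 <= i < k.+2) g k v i + 1 = X k + 4.
           by rewrite -H [RHS]big_nat_recr // /g ha1 r1.
         have := Lw4 k. lra.
      -- have -> : v = rcons (nseq k.+2 3) 1.
           apply: (@eq_from_nth _ 0%N); first by rewrite size_rcons size_nseq hm.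
           move=> i; rewrite hm => hi; rewrite nth_rcons size_nseq nth_nseq.
           case: ltnP => h1.
           ++ apply/eqP; rewrite eqn_leq; apply/andP; split.
                by apply: leq_trans (dec 0 i _ _) h0; rewrite ?hm; lia.
              by apply: ge3; lia.
           ++ have -> : i = k.+2 by lia.
              by rewrite ha1 eqxx.
         by rewrite !inE eqxx !orbT.
    *
      have hk0 : (k < size v)%N by rewrite hm; lia.
      have H4 : \sum_(0 <= i < k) g k v i + g k v k + rho k 2 + 1 = X k + 4.
        by rewrite -H2 [in RHS]big_nat_recr // /g hb.
      case: (ltnP 4 (nth 0%N v k)) => hd.
      -- have ge5 i : (i <= k)%N -> (5 <= nth 0%N v i)%N.
           by move=> hi; apply: leq_trans hd (dec _ _ hi hk0).
         case: (ltnP 5 (nth 0%N v 0)) => h0.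
         ++ exfalso.
            have S : rho k 6 + X k * rho k 5 <= \sum_(0 <= i < k.+1) g k v i.
              rewrite big_ltn //; apply: lerD; first exact: gmin.
              rewrite (_ : X k = (k.+1 - 1)%N%:R); last by rewrite subn1.
              by apply: sum_ge => i /andP[h1 h2]; apply: gmin; apply: ge5; lia.
            have H5 : \sum_(0 <= i < k.+1) g k v i + rho k 2 + 1 = X k + 4.
              by rewrite -H2 /g hb.
            have := Lw6 k. lra.
         ++ have -> : v = nseq k.+1 5 ++ [:: 2; 1].
              apply: (@eq_from_nth _ 0%N); first by rewrite size_cat size_nseq hm /=; lia.
              move=> i; rewrite hm => hi; rewrite nth_cat size_nseq nth_nseq.
              case: ltnP => h1.
              ** apply/eqP; rewrite eqn_leq; apply/andP; split.
                   by apply: leq_trans (dec 0 i _ _) h0; rewrite ?hm; lia.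
                 by apply: ge5; lia.
              ** case E: (i - k.+1)%N => [|[|j]] /=.
                 --- by have -> : i = k.+1 by lia.
                 --- by have -> : i = k.+2 by lia.
                 --- exfalso; lia.
            by rewrite !inE eqxx !orbT.
      -- exfalso.
         have S : \sum_(0 <= i < k) g k v i <= X k * (1 + cc k).
           rewrite (_ : X k = (k - 0)%N%:R); last by rewrite subn0.
           by apply: sum_le => i _; apply: ltW.
         have := gmax k 4 hd. have := Fk k. lra.
- move: H; rewrite hm => H.
  case: (ltnP 1 (nth 0%N v 0)) => h0.
  + exfalso.
    have S : rho k 2 + (X k + 3) * 1 <= \sum_(0 <= i < k.+4) g k v i.
      rewrite big_ltn; last lia. apply: lerD; first exact: gmin.
      rewrite -(natXsub k 1 (k.+4) 3) //; last lia.
      by apply: sum_ge => i /andP[h1 h2]; apply: gge1; rewrite hm.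
    have := Lw2 k. lra.
  + have -> : v = nseq k.+4 1.
      apply: eq_nseq; first by rewrite hm.
      move=> i hi; apply/eqP; rewrite eqn_leq; apply/andP; split.
        by apply: leq_trans (dec 0 i _ _) h0; rewrite ?hm; lia.
      by apply: pos; rewrite hm.
    by rewrite !inE eqxx.
- exfalso.
  have S : (size v - 0)%N%:R * 1 <= \sum_(0 <= i < size v) g k v i.
    by apply: sum_ge => i /andP[_ h]; apply: gge1.
  have : (X k + 5) <= (size v - 0)%N%:R.
    by rewrite subn0 -(natX k 5) ler_nat; lia.
  lra.
Qed.

Lemma natS2 k : (k.+2)%:R = X k + 2 :> rat.
Proof. by rewrite -addn2 natX. Qed.
Lemma natS3 k : (k.+3)%:R = X k + 3 :> rat.
Proof. by rewrite -addn3 natX. Qed.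
Lemma natS4 k : (k.+4)%:R = X k + 4 :> rat.
Proof. by rewrite -addn4 natX. Qed.

Lemma nthS (x : nat) s i : nth 0%N (x :: s) i.+1 = nth 0%N s i.
Proof. by []. Qed.

Lemma vle_of L v : (forall i, (i < size L)%N -> (nth 0%N L i <= nth 0%N v i)%N) -> vle L v.
Proof. by move=> h i; case: (ltnP i (size L)) => hi; [exact: h | rewrite nth_default]. Qed.

Lemma B_dom k v : inV v -> (k + 4)%:R < rhov k v -> exists2 L, L \in Blist k & vle L v.
Proof.
move=> /andP[srt pv] H.
have hx : 0 <= X k := ler0n _ _.
have c0 := Fc0 k. have c1 := Fc1 k.
have hxc : 0 <= X k * cc k by apply: mulr_ge0; lra.
rewrite rhov_nth K4 in H.
have {}H : X k + 4 < \sum_(0 <= i < size v) g k v i := H.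
have pos i : (i < size v)%N -> (0 < nth 0%N v i)%N := fun h => pos_nth v i pv h.
have dec i j : (i <= j)%N -> (j < size v)%N -> (nth 0%N v j <= nth 0%N v i)%N :=
  fun a b => srt_nth v i j srt a b.
have glt i : g k v i < 1 + cc k := rho_lt _ _.
have gmax i a : (nth 0%N v i <= a)%N -> g k v i <= rho k a := fun h => @rho_mono k _ _ h.
have r1 := rho1 k.
have [hm|[hm|[hm|hm]]] : (size v <= k.+2)%N \/ size v = k.+3 \/
    size v = k.+4 \/ (k.+4.+1 <= size v)%N by lia.
- exfalso.
  have S : \sum_(0 <= i < size v) g k v i <= (size v - 0)%N%:R * (1 + cc k).
    by apply: sum_le => i _; apply: ltW.
  have hm' : ((size v - 0)%N%:R : rat) <= X k + 2.
    by rewrite subn0 -(natX k 2) ler_nat; lia.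
  have p1 := ler_wpM2r (_ : 0 <= 1 + cc k) hm'.
  have := p1 (ltac:(lra)). lra.
- move: H; rewrite hm => H.
  have hk2 : (k.+2 < size v)%N by rewrite hm; lia.
  have hlast := pos _ hk2.
  case: (ltnP 1 (nth 0%N v k.+2)) => ha.
  + have ge2 i : (i <= k.+2)%N -> (2 <= nth 0%N v i)%N.
      by move=> hi; apply: leq_trans ha (dec _ _ hi hk2).
    case: (ltnP 2 (nth 0%N v 0)) => h0.
    * exists (3%N :: nseq k.+2 2%N); first by rewrite !inE eqxx !orbT.
      apply: vle_of => -[|i] hi; first exact: h0.
      rewrite nthS; rewrite /= ?size_nseq in hi.
      rewrite nth_nseq; case: ifP => // hh; apply: ge2; lia.
    * exfalso.
      have S : \sum_(0 <= i < k.+3) g k v i <= (k.+3 - 0)%N%:R * rho k 2.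
        apply: sum_le => i hi; apply: gmax.
        by apply: leq_trans (dec 0 i _ _) h0; rewrite ?hm; lia.
      rewrite subn0 natS3 in S. have := Id2 k. lra.
  + have ha1 : nth 0%N v k.+2 = 1%N by lia.
    have hk1 : (k.+1 < size v)%N by rewrite hm; lia.
    have H2 : X k + 4 < \sum_(0 <= i < k.+1) g k v i + g k v k.+1 + 1.
      by move: H; rewrite big_nat_recr // big_nat_recr // /g ha1 r1.
    case: (ltngtP (nth 0%N v k.+1) 2) => hb.
    * exfalso.
      have hb1 : g k v k.+1 <= 1 by rewrite -r1; apply: gmax; lia.
      have : \sum_(0 <= i < k.+1) g k v i <= (k.+1 - 0)%N%:R * (1 + cc k).
        by apply: sum_le => i _; apply: ltW.
      rewrite subn0 natS1. lra.
    * have ge3 i : (i <= k.+1)%N -> (3 <= nth 0%N v i)%N.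
        by move=> hi; apply: leq_trans hb (dec _ _ hi hk1).
      case: (ltnP 3 (nth 0%N v 0)) => h0.
      -- exists (4%N :: rcons (nseq k.+1 3%N) 1%N); first by rewrite !inE eqxx !orbT.
         apply: vle_of => -[|i] hi; first exact: h0.
         rewrite nthS; rewrite /= ?size_rcons ?size_nseq in hi.
         rewrite nth_rcons size_nseq nth_nseq; case: ifP => hh; first by rewrite ?hh; apply: ge3; lia.
         case: ifP => // /eqP hh'; by rewrite hh' ha1.
      -- exfalso.
         have H3 : X k + 4 < \sum_(0 <= i < k.+2) g k v i + 1.
           by move: H; rewrite big_nat_recr // /g ha1 r1.
         have S : \sum_(0 <= i < k.+2) g k v i <= (k.+2 - 0)%N%:R * rho k 3.
           apply: sum_le => i hi; apply: gmax.
           by apply: leq_trans (dec 0 i _ _) h0; rewrite ?hm; lia.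
         rewrite subn0 natS2 in S. have := Id3 k. lra.
    * have hk0 : (k < size v)%N by rewrite hm; lia.
      have H4 : X k + 4 < \sum_(0 <= i < k) g k v i + g k v k + rho k 2 + 1.
        by move: H2; rewrite big_nat_recr // /g hb.
      case: (ltnP 4 (nth 0%N v k)) => hd.
      -- have ge5 i : (i <= k)%N -> (5 <= nth 0%N v i)%N.
           by move=> hi; apply: leq_trans hd (dec _ _ hi hk0).
         case: (ltnP 5 (nth 0%N v 0)) => h0.
         ++ exists (6%N :: nseq k 5%N ++ [:: 2%N; 1%N]); first by rewrite !inE eqxx !orbT.
            apply: vle_of => -[|i] hi; first exact: h0.
            rewrite nthS; rewrite /= ?size_cat ?size_nseq in hi.
            rewrite nth_cat size_nseq nth_nseq; case: ifP => hh; first by rewrite ?hh; apply: ge5; lia.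
            case E: (i - k)%N => [|[|j]] /=.
            ** have -> : i = k by lia.
               by rewrite hb.
            ** have -> : i = k.+1 by lia.
               by rewrite ha1.
            ** by move: hi => /=; lia.
         ++ exfalso.
            have S : \sum_(0 <= i < k.+1) g k v i <= (k.+1 - 0)%N%:R * rho k 5.
              apply: sum_le => i hi; apply: gmax.
              by apply: leq_trans (dec 0 i _ _) h0; rewrite ?hm; lia.
            have H5 : X k + 4 < \sum_(0 <= i < k.+1) g k v i + rho k 2 + 1.
              by move: H2; rewrite /g hb.
            rewrite subn0 natS1 in S. have := Id5 k. lra.
      -- exfalso.
         have S : \sum_(0 <= i < k) g k v i <= X k * (1 + cc k).
           rewrite (_ : X k = (k - 0)%N%:R); last by rewrite subn0.
           by apply: sum_le => i _; apply: ltW.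
         have := gmax k 4 hd. have := Fk k. lra.
- move: H; rewrite hm => H.
  case: (ltnP 1 (nth 0%N v 0)) => h0.
  + exists (2%N :: nseq k.+3 1%N); first by rewrite !inE eqxx !orbT.
    apply: vle_of => -[|i] hi; first exact: h0.
      rewrite nthS; rewrite /= ?size_nseq in hi.
    rewrite nth_nseq; case: ifP => // hh; apply: pos; lia.
  + exfalso.
    have S : \sum_(0 <= i < k.+4) g k v i <= (k.+4 - 0)%N%:R * rho k 1.
      apply: sum_le => i hi; apply: gmax.
      by apply: leq_trans (dec 0 i _ _) h0; rewrite ?hm; lia.
    rewrite subn0 natS4 r1 in S. lra.
- exists (nseq k.+4.+1 1%N); first by rewrite !inE eqxx.
  apply: vle_of => i; rewrite size_nseq => hi; rewrite nth_nseq hi; apply: pos; lia.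
Qed.

Lemma rhov_cons k x s : rhov k (x :: s) = rho k x + rhov k s.
Proof. by rewrite /rhov big_cons. Qed.
Lemma rhov_nil k : rhov k [::] = 0.
Proof. by rewrite /rhov big_nil. Qed.
Lemma rhov_cat k s t : rhov k (s ++ t) = rhov k s + rhov k t.
Proof. by rewrite /rhov big_cat. Qed.
Lemma rhov_nseq k n a : rhov k (nseq n a) = n%:R * rho k a.
Proof.
elim: n => [|n IH]; first by rewrite rhov_nil mul0r.
by rewrite /= rhov_cons IH -addn1 natrDn mulrDl mul1r addrC.
Qed.

Lemma natS5 k : (k.+4.+1)%:R = X k + 5 :> rat.
Proof. by rewrite (_ : k.+4.+1 = (k + 5)%N) ?natX //; lia. Qed.

Lemma size_le (w L : seq nat) : all (fun x => 0 < x)%N w -> vle w L -> (size w <= size L)%N.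
Proof.
move=> pw hle. case E: (size w) => [//|m].
have hm : (m < size w)%N by rewrite E.
have := pos_nth w m pw hm. have := hle m.
case: (ltnP m (size L)) => // hl h2 h3.
by rewrite (nth_default _ hl) in h2; lia.
Qed.

Lemma eq_pos (w L : seq nat) : all (fun x => 0 < x)%N w -> all (fun x => 0 < x)%N L ->
  (forall i, nth 0%N w i = nth 0%N L i) -> w = L.
Proof.
move=> pw pL h.
have h1 : (size w <= size L)%N by apply: size_le => // i; rewrite h.
have h2 : (size L <= size w)%N by apply: size_le => // i; rewrite h.
apply: (@eq_from_nth _ 0%N); first by apply/eqP; rewrite eqn_leq h1 h2.
by move=> i _; apply: h.
Qed.

Lemma min_gen k L w : inV w -> all (fun x => 0 < x)%N L -> vle w L -> w <> L ->
  all (fun x => rhov k L - (X k + 4) <= rho k x - rho k x.-1) L ->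
  rhov k w <= X k + 4.
Proof.
move=> /andP[_ pw] pL hle hne hall.
have hs := size_le w L pw hle.
have [j hjN hj] : exists2 j, (j < size L)%N & (nth 0%N w j < nth 0%N L j)%N.
  case: (boolP (has (fun j => nth 0%N w j < nth 0%N L j)%N (iota 0 (size L)))).
  - by move=> /hasP[j]; rewrite mem_iota add0n => /andP[_ hj] hlt; exists j.
  - move=> /hasPn hn; exfalso; apply: hne; apply: eq_pos => // i.
    apply/eqP; rewrite eqn_leq hle /=.
    case: (ltnP i (size L)) => hi.
    + have := hn i; rewrite mem_iota add0n hi /= => /(_ isT); by rewrite -leqNgt.
    + by rewrite [nth _ L _]nth_default.
have tail : \sum_(size w <= i < size L) g k w i = 0.
  by rewrite big_nat_cond big1 // => i /andP[/andP[hi _] _]; rewrite /g nth_default.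
have rw : rhov k w = \sum_(0 <= i < size L) g k w i.
  by rewrite rhov_nth (@big_cat_nat _ _ _ (size w) 0 (size L)) //= tail addr0.
have rL : rhov k L = \sum_(0 <= i < size L) g k L i by rewrite rhov_nth.
have sL : rhov k L = g k L j + \sum_(i < size L | i != Ordinal hjN) g k L i.
  by rewrite rL big_mkord (bigD1 (Ordinal hjN)).
have sw : rhov k w = g k w j + \sum_(i < size L | i != Ordinal hjN) g k w i.
  by rewrite rw big_mkord (bigD1 (Ordinal hjN)).
have le1 : \sum_(i < size L | i != Ordinal hjN) g k w i <=
           \sum_(i < size L | i != Ordinal hjN) g k L i.
  by apply: ler_sum => i _; apply: rho_mono; apply: hle.
have le2 : g k w j <= rho k (nth 0%N L j).-1 by apply: rho_mono; lia.
have hx : nth 0%N L j \in L by apply: mem_nth.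
have := allP hall _ hx. rewrite /g in sL sw le2. lra.
Qed.

Lemma path_nseq (b a : nat) n s : (a <= b)%N -> path geq a s -> path geq b (nseq n a ++ s).
Proof.
elim: n b => [|n IH] b hab /= hp.
- case: s hp => [//|y s] /= /andP[h1 h2]; rewrite h2 andbT; exact: leq_trans h1 hab.
- by rewrite hab /=; apply: IH.
Qed.

Lemma inV_mk b a n s : (a <= b)%N -> (0 < a)%N -> path geq a s ->
  all (fun x => 0 < x)%N s -> inV (b :: nseq n a ++ s).
Proof.
move=> hab ha hp hs; apply/andP; split; first exact: path_nseq.
by rewrite /= (leq_trans ha hab) all_cat all_nseq ha orbT hs.
Qed.

Lemma all_mk (P : pred nat) b a n s : P b -> P a -> all P s -> all P (b :: nseq n a ++ s).
Proof. by move=> hb ha hs; rewrite /= hb all_cat all_nseq ha orbT hs. Qed.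

Lemma all_mk1 (P : pred nat) b a n c : P b -> P a -> P c -> all P (b :: nseq n a ++ [:: c]).
Proof. by move=> hb ha hc; apply: all_mk => //=; rewrite hc. Qed.
Lemma all_mk2 (P : pred nat) b a n c d : P b -> P a -> P c -> P d -> all P (b :: nseq n a ++ [:: c; d]).
Proof. by move=> hb ha hc hd; apply: all_mk => //=; rewrite hc hd. Qed.

Lemma Blist_inV k L : L \in Blist k -> inV L.
Proof.
rewrite !inE => /orP[/eqP->|/orP[/eqP->|/orP[/eqP->|/orP[/eqP->|/eqP->]]]].
- by have := inV_mk 1 1 k.+4 [::] (leqnn _) isT isT isT; rewrite cats0.
- by have := inV_mk 2 1 k.+3 [::] isT isT isT isT; rewrite cats0.
- by have := inV_mk 3 2 k.+2 [::] isT isT isT isT; rewrite cats0.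
- by have := inV_mk 4 3 k.+1 [:: 1%N] isT isT isT isT; rewrite cats1.
- exact: inV_mk 6 5 k [:: 2%N; 1%N] isT isT isT isT.
Qed.

Lemma Alist_inV k L : L \in Alist k -> inV L.
Proof.
rewrite !inE => /orP[/eqP->|/orP[/eqP->|/orP[/eqP->|/eqP->]]].
- by have := inV_mk 1 1 k.+3 [::] (leqnn _) isT isT isT; rewrite cats0.
- by have := inV_mk 2 2 k.+2 [::] isT isT isT isT; rewrite cats0.
- by have := inV_mk 3 3 k.+1 [:: 1%N] isT isT isT isT; rewrite cats1.
- exact: inV_mk 5 5 k [:: 2%N; 1%N] isT isT isT isT.
Qed.

Lemma A_val k L : L \in Alist k -> rhov k L = X k + 4.
Proof.
rewrite !inE => /orP[/eqP->|/orP[/eqP->|/orP[/eqP->|/eqP->]]].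
- by rewrite rhov_nseq natS4 rho1 mulr1.
- by rewrite rhov_nseq natS3 Id2.
- by rewrite -cats1 rhov_cat rhov_nseq rhov_cons rhov_nil rho1 natS2 addr0 Id3.
- by rewrite rhov_cat rhov_nseq !rhov_cons rhov_nil rho1 natS1 addr0 addrA Id5.
Qed.

Definition okx k L x := rhov k L - (X k + 4) <= rho k x - rho k x.-1.

Lemma B_min k L : L \in Blist k -> X k + 4 < rhov k L /\
  (forall w, inV w -> vlt w L -> rhov k w <= X k + 4).
Proof.
move=> hL. have /andP[_ pL] := Blist_inV _ _ hL.
have gen : all (okx k L) L ->
    (forall w, inV w -> vlt w L -> rhov k w <= X k + 4).
  move=> ha w hw [h1 h2]; exact: (min_gen k L w hw pL h1 h2 ha).
have r0 := rho0 k. have r1 := rho1 k. have hx : 0 <= X k := ler0n _ _.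
move: hL gen; rewrite !inE => /orP[/eqP->|/orP[/eqP->|/orP[/eqP->|/orP[/eqP->|/eqP->]]]] gen;
  (split; last apply: gen).
- by rewrite rhov_nseq natS5 r1; lra.
- rewrite -[nseq _ _]cats0; apply: (all_mk _ 1 1 k.+4 [::]) => //;
  by rewrite /okx cats0 rhov_nseq natS5 r1 r0; lra.
- rewrite rhov_cons rhov_nseq natS3 r1. have := Lw2 k. lra.
- have e : rhov k (2%N :: nseq k.+3 1%N) = rho k 2 + (X k + 3).
    by rewrite rhov_cons rhov_nseq natS3 r1 mulr1.
  have := Lw2 k. have := M2a k. move=> h1 h2.
  rewrite -[nseq _ _]cats0; apply: all_mk => //; rewrite /okx cats0 e [_.-1]/= ?r1 ?r0; lra.
- rewrite rhov_cons rhov_nseq natS2. have := Lw3 k. lra.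
- have e : rhov k (3%N :: nseq k.+2 2%N) = rho k 3 + (X k + 2) * rho k 2.
    by rewrite rhov_cons rhov_nseq natS2.
  have := M3a k. have := M3b k. move=> h1 h2.
  rewrite -[nseq _ _]cats0; apply: all_mk => //; rewrite /okx cats0 e [_.-1]/= ?r1; lra.
- rewrite rhov_cons -cats1 rhov_cat rhov_nseq rhov_cons rhov_nil r1 natS1. have := Lw4 k. lra.
- have e : rhov k (4%N :: rcons (nseq k.+1 3%N) 1%N) = rho k 4 + (X k + 1) * rho k 3 + 1.
    by rewrite rhov_cons -cats1 rhov_cat rhov_nseq rhov_cons rhov_nil r1 natS1 addr0 addrA.
  have := M4a k. have := M4b k. have := M4c k. move=> h1 h2 h3.
  rewrite -cats1; apply: all_mk1; rewrite /okx cats1 e [_.-1]/= ?r1 ?r0; lra.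
- rewrite rhov_cons rhov_cat rhov_nseq !rhov_cons rhov_nil r1. have := Lw6 k. rewrite /X. lra.
- have e : rhov k (6%N :: nseq k 5%N ++ [:: 2%N; 1%N]) = rho k 6 + X k * rho k 5 + rho k 2 + 1.
    by rewrite rhov_cons rhov_cat rhov_nseq !rhov_cons rhov_nil r1 addr0 !addrA.
  have := M5a k. have := M5b k. have := M5c k. have := M5d k. move=> h1 h2 h3 h4.
  apply: all_mk2; rewrite /okx e [_.-1]/= ?r1 ?r0; lra.
Qed.

Lemma vle_cons a b s : (a <= b)%N -> vle (a :: s) (b :: s).
Proof. by move=> h [|i] //=. Qed.

Lemma vle_trans a b c : vle a b -> vle b c -> vle a c.
Proof. by move=> h1 h2 i; exact: leq_trans (h1 i) (h2 i). Qed.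

Lemma AB k L : L \in Blist k -> exists2 A, A \in Alist k & vle A L.
Proof.
rewrite !inE => /orP[/eqP->|/orP[/eqP->|/orP[/eqP->|/orP[/eqP->|/eqP->]]]].
- exists (nseq k.+4 1%N); first by rewrite !inE eqxx.
  move=> i; rewrite !nth_nseq; case: (ltnP i k.+4) => h1; case: (ltnP i k.+4.+1) => h2 //; lia.
- exists (nseq k.+4 1%N); first by rewrite !inE eqxx.
  exact: (vle_cons 1 2 (nseq k.+3 1%N)).
- exists (nseq k.+3 2%N); first by rewrite !inE eqxx !orbT.
  exact: (vle_cons 2 3 (nseq k.+2 2%N)).
- exists (rcons (nseq k.+2 3%N) 1%N); first by rewrite !inE eqxx !orbT.
  exact: (vle_cons 3 4 (rcons (nseq k.+1 3%N) 1%N)).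
- exists (nseq k.+1 5%N ++ [:: 2%N; 1%N]); first by rewrite !inE eqxx !orbT.
  exact: (vle_cons 5 6 (nseq k 5%N ++ [:: 2%N; 1%N])).
Qed.

Theorem proposition3 (k : nat) :
  (forall v : seq nat, inV v ->
     (rhov k v = (k + 4)%:R <->
      v \in [:: nseq (k + 4) 1%N; nseq (k + 3) 2%N;
                rcons (nseq (k + 2) 3%N) 1%N; nseq (k + 1) 5%N ++ [:: 2%N; 1%N]]))
  /\
  (forall v : seq nat, inV v ->
     ((rhov k v > (k + 4)%:R /\
       (forall w : seq nat, inV w -> vlt w v -> ~ (rhov k w > (k + 4)%:R))) <->
      v \in [:: nseq (k + 5) 1%N; 2%N :: nseq (k + 3) 1%N; 3%N :: nseq (k + 2) 2%N;
                4%N :: rcons (nseq (k + 1) 3%N) 1%N;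
                6%N :: nseq k 5%N ++ [:: 2%N; 1%N]]))
  /\
  (forall w : seq nat, inV w -> rhov k w > (k + 4)%:R ->
     exists v : seq nat, [/\ inV v, vlt v w & rhov k v = (k + 4)%:R]).
Proof.
have e1 : (k + 1)%N = k.+1 by lia.
have e2 : (k + 2)%N = k.+2 by lia.
have e3 : (k + 3)%N = k.+3 by lia.
have e4 : (k + 4)%N = k.+4 by lia.
have e5 : (k + 5)%N = k.+4.+1 by lia.
have eA : forall v : seq nat, (v \in [:: nseq (k + 4) 1%N; nseq (k + 3) 2%N;
                rcons (nseq (k + 2) 3%N) 1%N; nseq (k + 1) 5%N ++ [:: 2%N; 1%N]]) = (v \in Alist k).
  by move=> v; rewrite /Alist e1 e2 e3 e4.
have eB : forall v : seq nat, (v \in [:: nseq (k + 5) 1%N; 2%N :: nseq (k + 3) 1%N; 3%N :: nseq (k + 2) 2%N;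
                4%N :: rcons (nseq (k + 1) 3%N) 1%N;
                6%N :: nseq k 5%N ++ [:: 2%N; 1%N]]) = (v \in Blist k).
  by move=> v; rewrite /Blist e1 e2 e3 e5.
have K := K4 k.
split; [|split].
- move=> v hv; rewrite eA; split; first exact: A_dir.
  by move=> h; rewrite (A_val k v h) K.
- move=> v hv; rewrite eB; split.
  + move=> [hgt hmin]. have [L hL hLv] := B_dom k v hv hgt.
    case: (L =P v) => [<- //|hne].
    exfalso; apply: (hmin L (Blist_inV k L hL) (conj hLv hne)).
    rewrite K; exact: (B_min k L hL).1.
  + move=> hv'. have [h1 h2] := B_min k v hv'. rewrite K; split => // w hw hlt.
    have := h2 w hw hlt. lra.
- move=> w hw hgt. have [L hL hLw] := B_dom k w hw hgt. have [A hA hAL] := AB k L hL.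
  exists A; split.
  + exact: Alist_inV hA.
  + split; first exact: vle_trans hAL hLw.
    move=> e; move: hgt; rewrite -e (A_val k A hA) K. lra.
  + by rewrite (A_val k A hA) K.
Qed.
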